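(* Let $Z_h$ be a $(\beta,M)$-scale free hashing-based estimator with $\beta\in[\tfrac12,1]$ and $M\ge 1$. Let $x$ be a query with $\mu=\mu(x)>0$, let $\tau\in[\mu,1]$ and $\gamma\in[0,1]$, and suppose $x$ is $(\tau,\gamma)$-localized. Then $$\mathbb{E}[Z_h^2]\le \mu^2\cdot M^3\left\{2\tau^{\beta}+\gamma^{2-\beta}+\tau^{2\beta-1}\gamma^{\beta}\right\}\mu^{-\beta}.$$
   Context: Let $P=\{x_1,\dots,x_n\}\subset\mathbb{R}^d$ be a dataset and $x\in\mathbb{R}^d$ a query. Each data point has a nonnegative weight $w_i=w_i(x)$ (e.g. $w_i(x)=k(x,x_i)$ for a kernel $k$), and $\mu=\mu(x)=\frac1n\sum_{i=1}^n w_i(x)$. Given a family $\mathcal{H}$ of hash functions on $\mathbb{R}^d$ with a probability distribution $\nu$, sample $h\sim\nu$ and let $H(x)=\{i\in[n]:h(x_i)=h(x)\}$; let $I(x)$ be a uniformly random element of $H(x)$, or $\perp$ if $H(x)$ is empty; let $p_i=p_i(x)=\Pr_{h\sim\nu}[i\in H(x)]$, with the conventions $p_\perp=1$, $w_\perp=0$. The hashing-based estimator (HBE) is $Z_h=Z_h(x)=\frac{w_{I(x)}}{p_{I(x)}}\cdot\frac{|H(x)|}{n}$. The HBE is $(\beta,M)$-scale free (for $\beta\in(0,1]$, $M\ge1$) if $M^{-1}w_i(x)^\beta\le p_i(x)\le M\,w_i(x)^\beta$ for all $i\in[n]$ and all queries $x$. For $\tau\in[\mu,1]$ let $B_{\tau,\mu}(x)=\{i\in[n]: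 w_i\ge \mu/\tau\}$; for $\gamma\in[0,1]$ the query $x$ is $(\tau,\gamma)$-localized if $\sum_{i\in B_{\tau,\mu}(x)}w_i\ge(1-\gamma)\sum_{i=1}^n w_i$. *)

(* Defs.v *)
From HB Require Import structures.
From mathcomp Require Import all_boot all_order all_algebra.
From mathcomp Require Import all_classical all_reals all_analysis.
Set Implicit Arguments. Unset Strict Implicit. Unset Printing Implicit Defensive.
Import Order.TTheory GRing.Theory Num.Theory.
Local Open Scope ring_scope.
Local Open Scope classical_set_scope.

Section HBE.
Context {R : realType} {dd : nat} {n : nat} {U : eqType}.
Context {d0 : measure_display} {T : measurableType d0}.

(* A random hash function: omega |-> hash omega : R^dd -> U, omega ~ P (= nu). *)

Definition Hset (h : 'rV[R]_dd -> U) (xs : 'I_n -> 'rV[R]_dd) (x : 'rV[R]_dd)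
  : {set 'I_n} := [set i | h (xs i) == h x].

Definition collide_event (hash : T -> 'rV[R]_dd -> U) (xs : 'I_n -> 'rV[R]_dd)
  (x : 'rV[R]_dd) (i : 'I_n) : set T := [set om | hash om (xs i) == hash om x].

Definition coll_prob (P : probability T R) (hash : T -> 'rV[R]_dd -> U)
  (xs : 'I_n -> 'rV[R]_dd) (x : 'rV[R]_dd) (i : 'I_n) : R :=
  fine (P (collide_event hash xs x i)).

Definition mu_of (w : 'rV[R]_dd -> 'I_n -> R) (x : 'rV[R]_dd) : R :=
  n%:R^-1 * \sum_(i < n) w x i.

(* Value of the HBE Z_h for hash h and sampled index I (None = bottom,
   with w_bot = 0, p_bot = 1). *)
Definition Zval (w : 'rV[R]_dd -> 'I_n -> R) (p : 'rV[R]_dd -> 'I_n -> R)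
  (h : 'rV[R]_dd -> U) (xs : 'I_n -> 'rV[R]_dd) (x : 'rV[R]_dd)
  (I : option 'I_n) : R :=
  match I with
  | None => 0
  | Some i => w x i / p x i * (#|Hset h xs x|%:R / n%:R)
  end.

(* E[Z_h^2 | h] : I uniform on H(x) (I = bottom, Z = 0, if H(x) is empty) *)
Definition Zsq_given_h (w p : 'rV[R]_dd -> 'I_n -> R) (h : 'rV[R]_dd -> U)
  (xs : 'I_n -> 'rV[R]_dd) (x : 'rV[R]_dd) : R :=
  if #|Hset h xs x| == 0%N then (Zval w p h xs x None) ^+ 2
  else \sum_(i in Hset h xs x) #|Hset h xs x|%:R^-1 * (Zval w p h xs x (Some i)) ^+ 2.

Definition HBE_second_moment (P : probability T R) (hash : T -> 'rV[R]_dd -> U)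
  (w : 'rV[R]_dd -> 'I_n -> R) (xs : 'I_n -> 'rV[R]_dd) (x : 'rV[R]_dd) : \bar R :=
  (\int[P]_om (Zsq_given_h w (coll_prob P hash xs) (hash om) xs x)%:E)%E.

Definition scale_free (beta M : R) (w p : 'rV[R]_dd -> 'I_n -> R) : Prop :=
  forall (x : 'rV[R]_dd) (i : 'I_n),
    M^-1 * (w x i `^ beta) <= p x i /\ p x i <= M * (w x i `^ beta).

Definition Bset (w : 'rV[R]_dd -> 'I_n -> R) (x : 'rV[R]_dd) (tau : R) : {set 'I_n} :=
  [set i | mu_of w x / tau <= w x i].

Definition localized (w : 'rV[R]_dd -> 'I_n -> R) (x : 'rV[R]_dd) (tau gamma : R) : Prop :=
  (1 - gamma) * \sum_(i < n) w x i <= \sum_(i in Bset w x tau) w x i.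

End HBE.

(* Main.v *)
Require Import Defs.
From HB Require Import structures.
From mathcomp Require Import all_boot all_order all_algebra.
From mathcomp Require Import all_classical all_reals all_analysis.
From mathcomp Require Import measurable_realfun.
From mathcomp Require Import ring lra.
Import Order.TTheory GRing.Theory Num.Theory.
Local Open Scope ring_scope.
Local Open Scope classical_set_scope.
Section S.
Variable R : realType.
Lemma eqW (x y : R) : x = y -> x <= y.
Proof. by move=> ->. Qed.

Lemma powRDp (x a b : R) : 0 < x -> x `^ a * x `^ b = x `^ (a + b).
Proof. by move=> x0; rewrite powRD // lt0r_neq0 // implybT. Qed.

Lemma young_tan (W y q : R) : 0 <= W -> 0 < y -> 0 < q -> q < 1 ->
  W `^ q <= (q * W + (1 - q) * y) * y `^ (q - 1).
Proof.
move=> W0 y0 q0 q1.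
have h := @conjugate_powR R (W `^ q) (y `^ (1 - q)) q^-1 (1 - q)^-1
  (powR_ge0 _ _) (powR_ge0 _ _).
rewrite !invr_gt0 subr_gt0 q0 q1 !invrK in h.
have e : q + (1 - q) = 1 by rewrite addrC subrK.
have := h isT isT e.
have qn : q != 0 by rewrite lt0r_neq0.
have q1n : 1 - q != 0 by rewrite lt0r_neq0 // subr_gt0.
rewrite -!powRrM (mulfV qn) (mulfV q1n) (powRr1 W0) (powRr1 (ltW y0)) => hh.
have -> : W `^ q = (W `^ q * y `^ (1 - q)) * y `^ (q - 1).
  rewrite -mulrA powRDp //; have -> : 1 - q + (q - 1) = 0 by ring.
  by rewrite powRr0 mulr1.
apply: ler_wpM2r; first exact: powR_ge0.
rewrite (mulrC q) (mulrC (1 - q)). exact hh.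
Qed.

Lemma sum_powR_le n (A : {set 'I_n}) (W : 'I_n -> R) q :
  0 <= q -> q <= 1 -> (forall i, 0 <= W i) ->
  \sum_(i in A) W i `^ q <= n%:R `^ (1 - q) * (\sum_(i in A) W i) `^ q.
Proof.
move=> q0 q1 W0.
have [->|qn0] := eqVneq q 0.
  rewrite powRr0 subr0 powRr1 // mulr1.
  under eq_bigr do rewrite powRr0.
  rewrite sumr_const ler_nat.
  by rewrite -[X in (_ <= X)%N]card_ord max_card.
have [->|qn1] := eqVneq q 1.
  rewrite subrr powRr0 mul1r powRr1 ?sumr_ge0 //.
  by under eq_bigr do rewrite powRr1 //.
have qp : 0 < q by rewrite lt0r qn0.
have qlt : q < 1 by rewrite lt_neqAle qn1.
set s := \sum_(i in A) W i.
have s0 : 0 <= s by rewrite sumr_ge0.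
have [s00|sn0] := eqVneq s 0.
  have Wz := psumr_eq0P (fun i _ => W0 i) s00.
  rewrite big1 ?mulr_ge0 ?powR_ge0 // => i iA.
  by rewrite Wz // powR0.
have [i0 _] : exists i : 'I_n, true.
  move: sn0; rewrite /s psumr_neq0 //; case/hasP => i _ _; by exists i.
have n0 : (0 < n%:R :> R) by rewrite ltr0n (leq_ltn_trans _ (ltn_ord i0)).
have sp : 0 < s by rewrite lt0r sn0 s0.
set y := s / n%:R.
have y0 : 0 < y by rewrite divr_gt0.
apply: (le_trans (y := \sum_(i in A) (q * W i + (1 - q) * y) * y `^ (q - 1))).
  by apply: ler_sum => i _; apply: young_tan.
rewrite -big_distrl /= big_split /= -mulr_sumr -/s -mulr_sumr sumr_const.
apply: (le_trans (y := (q * s + (1 - q) * (y *+ n)) * y `^ (q - 1))).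
  apply: ler_wpM2r; first exact: powR_ge0.
  rewrite lerD2l ler_wpM2l ?subr_ge0 // -[y *+ #|A|]mulr_natr -[y *+ n]mulr_natr.
  rewrite ler_wpM2l ?(ltW y0) // ler_nat.
  by rewrite -[X in (_ <= X)%N]card_ord max_card.
have -> : y *+ n = s by rewrite -mulr_natr mulfVK // lt0r_neq0.
have -> : q * s + (1 - q) * s = s by ring.
rewrite /y powRM ?invr_ge0 ?ler0n //.
have -> : n%:R^-1 `^ (q - 1) = n%:R `^ (1 - q) :> R.
  rewrite -powR_inv1 ?ler0n // -powRrM; congr (_ `^ _); ring.
by rewrite mulrA mulr_powRB1 // mulrC.
Qed.

Lemma neg_pow_le (a mu tau r : R) : 0 < mu -> 0 < tau -> mu / tau <= a -> 0 <= r ->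
  a `^ (- r) <= tau `^ r * mu `^ (- r).
Proof.
move=> mu0 tau0 ha r0.
have a0 : 0 < a by apply: lt_le_trans ha; rewrite divr_gt0.
have h : mu `^ r <= a `^ r * tau `^ r.
  rewrite -(powRM _ (ltW a0) (ltW tau0)); apply: (ge0_ler_powR r0); rewrite ?nnegrE ?(ltW mu0) ?mulr_ge0 ?(ltW a0) ?(ltW tau0) //.
  by rewrite -ler_pdivrMr.
rewrite !powRN.
have ar0 : 0 < a `^ r by rewrite powR_gt0.
have tr0 : 0 < tau `^ r by rewrite powR_gt0.
have mr0 : 0 < mu `^ r by rewrite powR_gt0.
have -> : (a `^ r)^-1 = tau `^ r * (a `^ r * tau `^ r)^-1.
  by field; rewrite !lt0r_neq0.
rewrite ler_wpM2l ?(ltW tr0) // lef_pV2 // posrE mulr_gt0 //.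
Qed.

Lemma pair_bound (a b Pa Pb beta M : R) : 0 <= a -> 0 <= b -> 1/2 <= beta -> beta <= 1 ->
  1 <= M -> M^-1 * a `^ beta <= Pa -> Pa <= M * a `^ beta ->
  M^-1 * b `^ beta <= Pb -> Pb <= M * b `^ beta ->
  (a / Pa) ^+ 2 * (if Pa <= Pb then Pa else Pb) <= M ^+ 3 * (a * b `^ (1 - beta)) /\
  (a / Pa) ^+ 2 * (if Pa <= Pb then Pa else Pb) <= M ^+ 3 * (a `^ (2 - 2 * beta) * b `^ beta).
Proof.
move=> a0 b0 hb1 hb2 M1 hPa1 hPa2 hPb1 hPb2.
have M0 : 0 < M by apply: lt_le_trans M1.
have M0' : 0 <= M by apply: ltW.
have beta0 : 0 < beta by apply: lt_le_trans hb1.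
have Pa0 : 0 <= Pa by apply: le_trans hPa1; rewrite mulr_ge0 ?invr_ge0 ?M0' ?powR_ge0.
have Pb0 : 0 <= Pb by apply: le_trans hPb1; rewrite mulr_ge0 ?invr_ge0 ?M0' ?powR_ge0.
set m := if Pa <= Pb then Pa else Pb.
have m0 : 0 <= m by rewrite /m; case: ifP.
have ma : m <= M * a `^ beta by rewrite /m; case: ifP => // /negbT; rewrite -ltNge => /ltW h; apply: le_trans hPa2.
have mb : m <= M * b `^ beta by rewrite /m; case: ifP => // h; apply: le_trans hPb2.
have [a00|an0] := eqVneq a 0.
  rewrite a00 mul0r expr0n /= mul0r; split; rewrite mulr_ge0 ?exprn_ge0 ?M0' ?mulr_ge0 ?powR_ge0 //.
have ap : 0 < a by rewrite lt0r an0 a0.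
have Pap : 0 < Pa by apply: lt_le_trans hPa1; rewrite mulr_gt0 ?invr_gt0 ?powR_gt0.
have hc1 : a / Pa <= M * a `^ (1 - beta).
  rewrite ler_pdivrMr //; apply: le_trans (ler_wpM2l _ hPa1); last by rewrite mulr_ge0 ?powR_ge0 ?M0'.
  by rewrite mulrACA mulfV ?lt0r_neq0 // mul1r powRDp // subrK powRr1.
have hc : (a / Pa) ^+ 2 <= M ^+ 2 * a `^ (2 - 2 * beta).
  have -> : 2 - 2 * beta = (1 - beta) + (1 - beta) by ring.
  rewrite -powRDp // !expr2.
  have -> : M * M * (a `^ (1 - beta) * a `^ (1 - beta)) = (M * a `^ (1 - beta)) * (M * a `^ (1 - beta)) by ring.
  by apply: ler_pM; rewrite ?divr_ge0.
have c0 : 0 <= (a / Pa) ^+ 2 by rewrite exprn_ge0 ?divr_ge0.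
split.
  apply: (le_trans (ler_wpM2r m0 hc)).
  have key : a `^ (2 - 2 * beta) * m <= M * (a * b `^ (1 - beta)).
    have [ab|ba] := leP a b.
      apply: le_trans (ler_wpM2l (powR_ge0 _ _) ma) _.
      rewrite mulrCA ler_wpM2l ?M0' //.
      have -> : a `^ (2 - 2 * beta) * a `^ beta = a * a `^ (1 - beta).
        by rewrite powRDp // -{2}(powRr1 a0) powRDp //; congr (_ `^ _); ring.
      rewrite ler_wpM2l //; apply: ge0_ler_powR; rewrite ?nnegrE ?subr_ge0 //.
    apply: le_trans (ler_wpM2l (powR_ge0 _ _) mb) _.
    rewrite mulrCA ler_wpM2l ?M0' //.
    have [b00|bn0] := eqVneq b 0.
      by rewrite b00 powR0 ?mulr0 ?mulr_ge0 ?powR_ge0 // lt0r_neq0.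
    have bp : 0 < b by rewrite lt0r bn0 b0.
    have -> : b `^ beta = b `^ (2 * beta - 1) * b `^ (1 - beta).
      by rewrite powRDp //; congr (_ `^ _); ring.
    rewrite mulrA ler_wpM2r ?powR_ge0 //.
    apply: (le_trans (y := a `^ (2 - 2 * beta) * a `^ (2 * beta - 1))).
      rewrite ler_wpM2l ?powR_ge0 //; apply: (ge0_ler_powR); rewrite ?nnegrE ?(ltW bp) ?(ltW ba) //.
      by rewrite subr_ge0 -(@ler_pM2l _ 2^-1) ?invr_gt0 // mulr1 mulrA mulVf // mul1r -div1r.
    rewrite powRDp //; have -> : 2 - 2 * beta + (2 * beta - 1) = 1 by ring.
    by rewrite powRr1.
  by rewrite -mulrA (exprSr M 2) -mulrA ler_wpM2l ?exprn_ge0.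

apply: (le_trans (ler_wpM2l c0 mb)).
apply: (le_trans (ler_wpM2r (mulr_ge0 (ltW M0) (powR_ge0 _ _)) hc)).
rewrite le_eqVlt; apply/orP; left; apply/eqP; ring.
Qed.

Lemma powRBp (x a b : R) : 0 < x -> x `^ (a - b) = x `^ a / x `^ b.
Proof. by move=> x0; rewrite powRB // lt0r_neq0 // implybT. Qed.

Lemma powRD_nz (x a b : R) : a + b != 0 -> x `^ a * x `^ b = x `^ (a + b).
Proof. by move=> h; rewrite powRD // (negbTE h). Qed.

Lemma real_bound n (W p : 'I_n -> R) (B : {set 'I_n}) (beta M tau gamma mu : R) :
  (forall i, 0 <= W i) -> 1 / 2 <= beta -> beta <= 1 -> 1 <= M ->
  (forall i, M^-1 * W i `^ beta <= p i /\ p i <= M * W i `^ beta) ->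
  mu = n%:R^-1 * \sum_(i < n) W i -> 0 < mu -> mu <= tau -> 0 <= gamma ->
  (forall i, (i \in B) = (mu / tau <= W i)) ->
  (1 - gamma) * \sum_(i < n) W i <= \sum_(i in B) W i ->
  \sum_(i < n) \sum_(j < n) ((W i / p i) ^+ 2 / n%:R ^+ 2) *
      (if p i <= p j then p i else p j) <=
  mu ^+ 2 * M ^+ 3 *
     (2 * tau `^ beta + gamma `^ (2 - beta) + tau `^ (2 * beta - 1) * gamma `^ beta)
     * mu `^ (- beta).
Proof.
move=> W0 hb1 hb2 M1 hp hmu mu0 mutau g0 hB hloc.
set S := \sum_(i < n) W i in hmu hloc *.
have M0 : 0 < M by apply: lt_le_trans M1.
have beta0 : 0 < beta by apply: lt_le_trans hb1.
have tau0 : 0 < tau by apply: lt_le_trans mutau.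
have hn : 0 < n%:R :> R.
  rewrite ltr0n lt0n; apply/negP => /eqP n0.
  by move: mu0; rewrite hmu n0 invr0 mul0r ltxx.
have hS : S = n%:R * mu by rewrite hmu mulrA mulfV ?mul1r // lt0r_neq0.
have S0 : 0 <= S by rewrite sumr_ge0.
have splitS : S = \sum_(i in B) W i + \sum_(i | i \notin B) W i by rewrite /S (bigID (mem B)).
have sB : \sum_(i in B) W i <= S.
  by rewrite [leRHS]splitS lerDl sumr_ge0.
have sA : \sum_(i | i \notin B) W i <= gamma * S.
  have := hloc; rewrite [X in X <= _ -> _]mulrBl mul1r [X in _ - _ * X]splitS.
  move=> h; lra.
have WB : forall i, i \in B -> 0 < W i.
  by move=> i; rewrite hB => h; apply: lt_le_trans h; rewrite divr_gt0.
have hBle : forall i, i \in B -> mu / tau <= W i by move=> i; rewrite hB.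
set c := fun i => (W i / p i) ^+ 2.
set m := fun i j => if p i <= p j then p i else p j.
have -> : \sum_(i < n) \sum_(j < n) ((W i / p i) ^+ 2 / n%:R ^+ 2) * m i j =
    (\sum_(i < n) \sum_(j < n) c i * m i j) / n%:R ^+ 2.
  rewrite mulr_suml; apply: eq_bigr => i _; rewrite mulr_suml; apply: eq_bigr => j _.
  by rewrite /c mulrAC.
set Y1 := \sum_(j in B) W j `^ (1 - beta).
set Y2 := \sum_(i in B) W i `^ (2 - 2 * beta).
set Y3 := \sum_(i | i \notin B) W i `^ (2 - 2 * beta).
set Y4 := \sum_(j | j \notin B) W j `^ beta.
have hD : \sum_(i < n) \sum_(j < n) c i * m i j <= M ^+ 3 * (S * Y1 + (Y2 + Y3) * Y4).
  apply: (le_trans (y := \sum_(i < n) (\sum_(j in B) M ^+ 3 * (W i * W j `^ (1 - beta)) +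
        \sum_(j | j \notin B) M ^+ 3 * (W i `^ (2 - 2 * beta) * W j `^ beta)))).
    apply: ler_sum => i _; rewrite (bigID (mem B)) /=; apply: lerD; apply: ler_sum => j _;
    have [h1 h2] := hp i; have [h3 h4] := hp j;
    have [] := @pair_bound (W i) (W j) (p i) (p j) beta M (W0 i) (W0 j) hb1 hb2 M1 h1 h2 h3 h4 => //.
  rewrite big_split /= mulrDr; apply: lerD; apply/eqW.
    rewrite /Y1 /S big_distrl /= mulr_sumr; apply: eq_bigr => i _.
    by rewrite mulr_sumr mulr_sumr; apply: eq_bigr => j _.
  have -> : Y2 + Y3 = \sum_(i < n) W i `^ (2 - 2 * beta) by rewrite [RHS](bigID (mem B)) /=.
  rewrite /Y4 big_distrl /= mulr_sumr; apply: eq_bigr => i _.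
  by rewrite mulr_sumr mulr_sumr; apply: eq_bigr => j _.
have K0 : forall r, 0 <= tau `^ r * mu `^ (- r).
  by move=> r; rewrite mulr_ge0 ?powR_ge0.
have hb' : 0 <= 2 * beta - 1 by rewrite subr_ge0 -(@ler_pM2l _ 2^-1) ?invr_gt0 // mulr1 mulrA mulVf // mul1r -div1r.
have hY1 : Y1 <= S * (tau `^ beta * mu `^ (- beta)).
  apply: (le_trans (y := \sum_(j in B) W j * (tau `^ beta * mu `^ (- beta)))).
    apply: ler_sum => j jB.
    have -> : W j `^ (1 - beta) = W j * W j `^ (- beta) by rewrite -{2}(powRr1 (W0 j)) powRDp ?WB.
    by rewrite ler_wpM2l // neg_pow_le // ?hBle // ltW.
  by rewrite -mulr_suml ler_wpM2r.
have hY2 : Y2 <= S * (tau `^ (2 * beta - 1) * mu `^ (- (2 * beta - 1))).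
  apply: (le_trans (y := \sum_(j in B) W j * (tau `^ (2 * beta - 1) * mu `^ (- (2 * beta - 1))))).
    apply: ler_sum => j jB.
    have -> : W j `^ (2 - 2 * beta) = W j * W j `^ (- (2 * beta - 1)).
      rewrite -{2}(powRr1 (W0 j)) powRDp ?WB //; congr (_ `^ _); ring.
    by rewrite ler_wpM2l // neg_pow_le // ?hBle.
  by rewrite -mulr_suml ler_wpM2r.
have eqA : forall F : 'I_n -> R, \sum_(i | i \notin B) F i = \sum_(i in ~: B) F i.
  by move=> F; apply: eq_bigl => i; rewrite !inE.
have gS0 : 0 <= gamma * S by rewrite mulr_ge0.
have sA0 : 0 <= \sum_(i | i \notin B) W i by rewrite sumr_ge0.
have hY3 : Y3 <= n%:R `^ (2 * beta - 1) * (gamma * S) `^ (2 - 2 * beta).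
  have q0 : 0 <= 2 - 2 * beta by lra.
  have q1 : 2 - 2 * beta <= 1 by lra.
  rewrite /Y3 eqA; apply: (le_trans (sum_powR_le _ (~: B) W _ q0 q1 W0)).
  have -> : 1 - (2 - 2 * beta) = 2 * beta - 1 by ring.
  rewrite ler_wpM2l ?powR_ge0 //; apply: (ge0_ler_powR q0); rewrite ?nnegrE -?eqA //.
have hY4 : Y4 <= n%:R `^ (1 - beta) * (gamma * S) `^ beta.
  have q0 : 0 <= beta by lra.
  rewrite /Y4 eqA; apply: (le_trans (sum_powR_le _ (~: B) W _ q0 hb2 W0)).
  rewrite ler_wpM2l ?powR_ge0 //; apply: (ge0_ler_powR q0); rewrite ?nnegrE -?eqA //.
have Y10 : 0 <= Y1 by rewrite sumr_ge0 // => i _; rewrite powR_ge0.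
have Y20 : 0 <= Y2 by rewrite sumr_ge0 // => i _; rewrite powR_ge0.
have Y30 : 0 <= Y3 by rewrite sumr_ge0 // => i _; rewrite powR_ge0.
have Y40 : 0 <= Y4 by rewrite sumr_ge0 // => i _; rewrite powR_ge0.
have hU : M ^+ 3 * (S * Y1 + (Y2 + Y3) * Y4) <= M ^+ 3 * (S * (S * (tau `^ beta * mu `^ (- beta))) +
   (S * (tau `^ (2 * beta - 1) * mu `^ (- (2 * beta - 1))) +
    n%:R `^ (2 * beta - 1) * (gamma * S) `^ (2 - 2 * beta)) * (n%:R `^ (1 - beta) * (gamma * S) `^ beta)).
  rewrite ler_wpM2l ?exprn_ge0 ?(ltW M0) //; apply: lerD; first by rewrite ler_wpM2l.
  apply: ler_pM => //; first by rewrite addr_ge0.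
  by apply: lerD.
apply: (le_trans (y := (M ^+ 3 * (S * (S * (tau `^ beta * mu `^ (- beta))) +
   (S * (tau `^ (2 * beta - 1) * mu `^ (- (2 * beta - 1))) +
    n%:R `^ (2 * beta - 1) * (gamma * S) `^ (2 - 2 * beta)) * (n%:R `^ (1 - beta) * (gamma * S) `^ beta))) / n%:R ^+ 2)).
  by rewrite ler_wpM2r ?invr_ge0 ?exprn_ge0 ?ler0n // (le_trans hD hU).
have n0' : 0 <= n%:R :> R by rewrite ler0n.
have mu0' : 0 <= mu by rewrite ltW.
have an : n%:R `^ beta != 0 :> R by rewrite lt0r_neq0 // powR_gt0.
have bn : mu `^ beta != 0 by rewrite lt0r_neq0 // powR_gt0.
have nn : n%:R != 0 :> R by rewrite lt0r_neq0.
have mn : mu != 0 by rewrite lt0r_neq0.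
have e1 : n%:R `^ (1 - beta) = n%:R / n%:R `^ beta :> R by rewrite powRBp // powRr1.
have e2 : n%:R `^ (2 * beta - 1) = n%:R `^ beta * n%:R `^ beta / n%:R :> R.
  rewrite (_ : 2 * beta - 1 = (beta + beta) - 1); last by ring.
  by rewrite powRBp // -powRDp // powRr1.
have e3 : n%:R `^ (2 - 2 * beta) = n%:R * n%:R / (n%:R `^ beta * n%:R `^ beta) :> R.
  rewrite (_ : 2 - 2 * beta = (1 + 1) - (beta + beta)); last by ring.
  by rewrite powRBp // -!powRDp // powRr1.
have e4 : mu `^ (- beta) = (mu `^ beta)^-1 by rewrite powRN.
have e5 : mu `^ (- (2 * beta - 1)) = mu / (mu `^ beta * mu `^ beta).
  rewrite (_ : - (2 * beta - 1) = 1 - (beta + beta)); last by ring.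
  by rewrite powRBp // -powRDp // powRr1.
have e6 : mu `^ (2 - 2 * beta) = mu * mu / (mu `^ beta * mu `^ beta).
  rewrite (_ : 2 - 2 * beta = (1 + 1) - (beta + beta)); last by ring.
  by rewrite powRBp // -!powRDp // powRr1.
have eg : gamma `^ (2 - beta) = gamma `^ (2 - 2 * beta) * gamma `^ beta.
  rewrite powRD_nz; first by congr (_ `^ _); ring.
  rewrite lt0r_neq0 //; lra.
rewrite hS !(powRM _ g0) ?mulr_ge0 // !(powRM _ n0' mu0') e1 e2 e3 e4 e5 e6 eg.
rewrite -subr_ge0.
set a := n%:R `^ beta. set b := mu `^ beta.
apply: (le_trans (y := M ^+ 3 * mu ^+ 2 * tau `^ beta / b)).
  by rewrite divr_ge0 ?mulr_ge0 ?exprn_ge0 ?powR_ge0 // ltW.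
by apply: eqW; field; rewrite nn an bn.
Qed.
End S.

Theorem theorem5 (R : realType) (dd n : nat) (U : eqType)
  (d0 : measure_display) (T : measurableType d0) (P : probability T R)
  (hash : T -> 'rV[R]_dd -> U) (xs : 'I_n -> 'rV[R]_dd)
  (w : 'rV[R]_dd -> 'I_n -> R) (beta M tau gamma : R) (x : 'rV[R]_dd) :
  (forall q i, measurable (collide_event hash xs q i)) ->
  (forall q i, 0 <= w q i) ->
  1 / 2 <= beta -> beta <= 1 -> 1 <= M ->
  scale_free beta M w (coll_prob P hash xs) ->
  0 < mu_of w x ->
  mu_of w x <= tau -> tau <= 1 ->
  0 <= gamma -> gamma <= 1 ->
  localized w x tau gamma ->
  (HBE_second_moment P hash w xs x <=
   ((mu_of w x) ^+ 2 * M ^+ 3 *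
     (2 * tau `^ beta + gamma `^ (2 - beta) + tau `^ (2 * beta - 1) * gamma `^ beta)
     * (mu_of w x) `^ (- beta))%:E)%E.
Proof.
move=> mE w0 hb1 hb2 M1 hsf mu0 mutau tau1 g0 g1 hloc.
set p := coll_prob P hash xs.
set E := collide_event hash xs x.
have mEi : forall i, measurable (E i) := fun i => mE x i.
have hn : 0 < n%:R :> R.
  rewrite ltr0n lt0n; apply/negP => /eqP n0.
  move: mu0; rewrite /mu_of. move: (w x); rewrite n0 => f.
  by rewrite invr0 mul0r ltxx.
set k := fun i : 'I_n => (w x i / p x i) ^+ 2 / n%:R ^+ 2.
set e := fun i j : 'I_n => if p x i <= p x j then i else j.
have k0 : forall i, 0 <= k i by move=> i; rewrite /k divr_ge0 ?sqr_ge0 ?exprn_ge0 ?ler0n.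
have hind : forall om i, \1_(E i) om = (i \in Hset (hash om) xs x)%:R :> R.
  move=> om i; rewrite indicE.
  have -> : (om \in E i) = (i \in Hset (hash om) xs x); last by [].
  apply/idP/idP => h.
    by rewrite inE; exact: (set_mem h).
  by apply: mem_set; move: h; rewrite inE.
have Zeq : forall om, Zsq_given_h w p (hash om) xs x =
    \sum_(i < n) \sum_(j < n) k i * (\1_(E i) om * \1_(E j) om).
  move=> om; rewrite /Zsq_given_h; set Hs := Hset (hash om) xs x.
  case: ifP => [/eqP H0 | Hn0].
    rewrite /= expr0n /= big1 // => i _; rewrite big1 // => j _.
    by rewrite hind (card0_eq H0) /= mul0r mulr0.
  have cardE : \sum_(j < n) ((j \in Hs)%:R : R) = #|Hs|%:R.
    rewrite (_ : \sum_(j < n) ((j \in Hs)%:R : R) = \sum_(j in Hs) (1 : R)).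
      by rewrite sumr_const.
    by rewrite [RHS]big_mkcond; apply: eq_bigr => j _; case: (j \in Hs).
  have Hn : #|Hs|%:R != 0 :> R by rewrite pnatr_eq0 Hn0.
  transitivity (\sum_(i in Hs) k i * #|Hs|%:R).
    apply: eq_bigr => i _; rewrite /Zval /k; set a := w x i / p x i.
    by field; rewrite Hn lt0r_neq0.
  rewrite big_mkcond; apply: eq_bigr => i _; rewrite hind; case: (i \in Hs) => /=.
    rewrite -cardE mulr_sumr; apply: eq_bigr => j _; by rewrite hind mul1r.
  by rewrite big1 // => j _; rewrite mul0r mulr0.
have Zle : forall om, \sum_(i < n) \sum_(j < n) k i * (\1_(E i) om * \1_(E j) om) <=
    \sum_(i < n) \sum_(j < n) k i * \1_(E (e i j)) om.
  move=> om; apply: ler_sum => i _; apply: ler_sum => j _; apply: (ler_wpM2l (k0 i)).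
  rewrite /e; case: ifP => _; rewrite !indicE;
  by case: (om \in E i); case: (om \in E j); rewrite /= ?mul1r ?mulr1 ?mul0r ?mulr0.
have Int : (\int[P]_om (\sum_(i < n) \sum_(j < n) k i * \1_(E (e i j)) om)%:E =
    (\sum_(i < n) \sum_(j < n) k i * p x (e i j))%:E)%E.
  have mij : forall i j, measurable_fun setT (fun om => (k i * \1_(E (e i j)) om)).
    move=> i j; apply: measurable_funM; first exact: measurable_cst.
    exact: measurable_indic.
  have pij : forall i j om, 0 <= k i * \1_(E (e i j)) om.
    by move=> i j om; rewrite mulr_ge0 // indicE ler0n.
  rewrite (eq_integral (fun om => \sum_(i < n) (\sum_(j < n) k i * \1_(E (e i j)) om)%:E)%E); last first.
    by move=> om _; rewrite sumEFin.
  rewrite ge0_integral_sum //; last 2 first.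
  - move=> i; apply/measurable_EFinP; apply: measurable_sum => j; exact: mij.
  - by move=> i om _; rewrite lee_fin sumr_ge0.
  rewrite -sumEFin; apply: eq_bigr => i _.
  rewrite (eq_integral (fun om => \sum_(j < n) (k i * \1_(E (e i j)) om)%:E)%E); last first.
    by move=> om _; rewrite sumEFin.
  rewrite ge0_integral_sum //; last 2 first.
  - by move=> j; apply/measurable_EFinP; exact: mij.
  - by move=> j om _; rewrite lee_fin.
  rewrite -sumEFin; apply: eq_bigr => j _.
  rewrite (eq_integral (fun om => ((k i)%:E * (\1_(E (e i j)) om)%:E)%E)); last first.
    by move=> om _; rewrite EFinM.
  rewrite (@ge0_integralZl_EFin _ _ _ P setT measurableT (fun om => (\1_(E (e i j)) om)%:E)%E _ _ (k i) (k0 i)); last 2 first.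
  - by move=> om _; rewrite lee_fin indicE ler0n.
  - by apply/measurable_EFinP; exact: measurable_indic.
  rewrite integral_indic // setIT -[X in (_ * X = _)%E]fineK; last exact: fin_num_measure.
  by rewrite -!EFinM.

have RB : \sum_(i < n) \sum_(j < n) k i * p x (e i j) <=
   (mu_of w x) ^+ 2 * M ^+ 3 *
     (2 * tau `^ beta + gamma `^ (2 - beta) + tau `^ (2 * beta - 1) * gamma `^ beta)
     * (mu_of w x) `^ (- beta).
  have := @real_bound R n (w x) (p x) (Bset w x tau) beta M tau gamma (mu_of w x)
    (w0 x) hb1 hb2 M1 (hsf x) erefl mu0 mutau g0 (fun i => ltac:(by rewrite inE)) hloc.
  apply: le_trans; apply: eqW; apply: eq_bigr => i _; apply: eq_bigr => j _.
  by rewrite /e /k; case: ifP.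
rewrite /HBE_second_moment -/p.
apply: (@le_trans _ _ (\int[P]_om (\sum_(i < n) \sum_(j < n) k i * \1_(E (e i j)) om)%:E)%E).
  apply: ge0_le_integral => //.
  - move=> om _; rewrite lee_fin Zeq; apply: sumr_ge0 => i _; apply: sumr_ge0 => j _.
    by rewrite mulr_ge0 // !indicE mulr_ge0 // ler0n.
  - rewrite (_ : (fun om => (Zsq_given_h w p (hash om) xs x)%:E) =
        (fun om => (\sum_(i < n) \sum_(j < n) k i * (\1_(E i) om * \1_(E j) om))%:E)%E);
      last by apply/funext => om; rewrite Zeq.
    apply/measurable_EFinP; apply: measurable_sum => i; apply: measurable_sum => j.
    apply: measurable_funM; first exact: measurable_cst.
    by apply: measurable_funM; apply: measurable_indic.
  - apply/measurable_EFinP; apply: measurable_sum => i; apply: measurable_sum => j.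
    apply: measurable_funM; first exact: measurable_cst.
    exact: measurable_indic.
  - by move=> om _; rewrite lee_fin Zeq.
by rewrite Int lee_fin.
Qed.
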